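(* Let $\delta_\ell=94/194$. Let $G=(V,E)$ be an $(n-4)$-regular graph on $n>4$ nodes in which every clique has at most $\delta_\ell n$ nodes. Let $V_i\subseteq V$ with $|V_i|=(\frac12+\delta)n$ for some $0<\delta<\frac12$, and let $\widehat{\alpha}\,n$ be the number of nodes of a largest clique in the subgraph induced by $V\setminus V_i$. Then $$n(n-4)\,\mathsf M(V_i)\le\Big(4\delta^2-\delta-\tfrac12+2\widehat\alpha\Big)n\le\Big(2\delta_\ell-\tfrac12\Big)n.$$
   Context: For a finite simple undirected graph $G=(V,E)$ with $m=|E|\ge1$ edges, degrees $d_v$, and $a_{u,v}=1$ if $\{u,v\}\in E$ and $0$ otherwise: for $C\subseteq V$, $\mathsf M(C)=\frac{1}{2m}\sum_{u\in C}\sum_{v\in C}\big(a_{u,v}-\frac{d_ud_v}{2m}\big)$, the sum over all ordered pairs including $u=v$. *)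

(* Defs.v *)
From HB Require Import structures.
From mathcomp Require Import all_boot all_order all_algebra.
Set Implicit Arguments. Unset Strict Implicit. Unset Printing Implicit Defensive.
Import Order.TTheory GRing.Theory Num.Theory.

Definition simple_graph (T : finType) (e : rel T) : Prop :=
  symmetric e /\ irreflexive e.

Definition deg (T : finType) (e : rel T) (v : T) : nat := #|[set u | e v u]|.

Definition regular (T : finType) (e : rel T) (k : nat) : Prop :=
  forall v, deg e v = k.

Definition edges (T : finType) (e : rel T) : {set {set T}} :=
  [set S : {set T} | [exists u, exists v, e u v && (S == [set u; v])]].

Definition nedges (T : finType) (e : rel T) : nat := #|edges e|.

Definition clique (T : finType) (e : rel T) (C : {set T}) : bool :=
  [forall u in C, forall v in C, (u != v) ==> e u v].

(* number of nodes of a largest clique of the subgraph induced by A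
   (cliques of G[A] are exactly cliques of G contained in A) *)
Definition max_clique_in (T : finType) (e : rel T) (A : {set T}) : nat :=
  \max_(C : {set T} | clique e C && (C \subset A)) #|C|.

Local Open Scope ring_scope.

Definition modularity (R : realFieldType) (T : finType) (e : rel T)
    (C : {set T}) : R :=
  (1 / (2 * (nedges e)%:R)) *
  \sum_(u in C) \sum_(v in C)
     ((e u v)%:R - ((deg e u)%:R * (deg e v)%:R) / (2 * (nedges e)%:R)).

Definition delta_l (R : realFieldType) : R := 94%:R / 194%:R.

(* Main.v *)
Require Import Defs.
From HB Require Import structures.
From mathcomp Require Import all_boot all_order all_algebra.
From Stdlib Require Import Ring.
Import Order.TTheory GRing.Theory Num.Theory.
From Stdlib Require Import Lia.
Set Implicit Arguments. Unset Strict Implicit. Unset Printing Implicit Defensive.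

Section Comb.
Variables (T : finType) (e : rel T).
Hypothesis Hsym : symmetric e.
Hypothesis Hirr : irreflexive e.

Lemma deg_sum v : deg e v = \sum_u (e v u : nat).
Proof. by rewrite /deg -sum1_card big_mkcond /=; apply: eq_bigr => u _; rewrite inE; case: (e v u). Qed.

Lemma handshake : (2 * nedges e = \sum_u \sum_v (e u v : nat))%N.
Proof.
pose P := [set p : T * T | e p.1 p.2].
have -> : (\sum_u \sum_v (e u v : nat) = #|P|)%N.
  rewrite pair_big /= -sum1_card [RHS]big_mkcond /=; apply: eq_bigr => -[u v] _.
  by rewrite inE /=; case: (e u v).
rewrite -sum1_card (partition_big (fun p : T * T => [set p.1; p.2]) (mem (edges e))) /=; last first.
  by move=> [u v]; rewrite !inE /= => huv; apply/existsP; exists u; apply/existsP; exists v; rewrite huv eqxx.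
rewrite /nedges -sum1_card big_distrr /=; apply: eq_bigr => S.
rewrite inE => /existsP [u /existsP [v /andP [huv /eqP ->]]].
have nuv : u != v by apply: contraTneq huv => ->; rewrite Hirr.
have h2 : ((u,v) != (v,u)) by rewrite xpair_eqE negb_and nuv.
rewrite muln1; symmetry; transitivity #|[set (u,v); (v,u)]|; last by rewrite cards2 xpair_eqE negb_and nuv.
rewrite -sum1_card; apply: eq_bigl => -[a b] /=.
rewrite !inE /= xpair_eqE.
apply/idP/idP.
- case/andP=> hab /eqP hS.
  have nab : a != b by apply: contraTneq hab => ->; rewrite Hirr.
  have ha : a \in [set u; v] by rewrite -hS !inE eqxx.
  have hb : b \in [set u; v] by rewrite -hS !inE eqxx orbT.
  move: ha hb; rewrite !inE => /orP [] /eqP ha /orP [] /eqP hb; subst a b.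
  + by rewrite eqxx in nab.
  + by rewrite !eqxx.
  + by rewrite !eqxx orbT.
  + by rewrite eqxx in nab.
- case/orP => /andP [/eqP /= -> /eqP /= ->]; first by rewrite huv eqxx.
  by rewrite Hsym huv setUC eqxx.
Qed.

Definition SS (A B : {set T}) := (\sum_(u in A) \sum_(v in B) (e u v : nat))%N.

Lemma SS_sym A B : SS A B = SS B A.
Proof. rewrite /SS exchange_big /=; apply: eq_bigr => u _; apply: eq_bigr => v _; by rewrite Hsym. Qed.

Lemma deg_split (B : {set T}) u : deg e u = (\sum_(v in B) (e u v : nat) + \sum_(v in ~: B) (e u v : nat))%N.
Proof. rewrite deg_sum (bigID (mem B)) /=; congr (_ + _); apply: eq_bigl => v; by rewrite inE. Qed.

Lemma deg_sum_set (A B : {set T}) : (\sum_(u in A) deg e u = SS A B + SS A (~: B))%N.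
Proof. rewrite /SS -big_split /=; apply: eq_bigr => u _; exact: deg_split. Qed.

Lemma clique_bound (A : {set T}) : (2 * #|A| <= 2 * max_clique_in e A +
   \sum_(u in A) \sum_(v in A) ((u != v) && ~~ e u v : nat))%N.
Proof.
pose rk := fun x : T => nat_of_ord (enum_rank x).
have rkE x y : (rk x == rk y) = (x == y) by rewrite /rk -(inj_eq enum_rank_inj).
pose cnt v := (\sum_(w in A) ((rk w < rk v)%N && ~~ e v w : nat))%N.
pose Zl := (\sum_(v in A) cnt v)%N.
have HZ : (\sum_(u in A) \sum_(v in A) ((u != v) && ~~ e u v : nat) = Zl + Zl)%N.
  have -> : (\sum_(u in A) \sum_(v in A) ((u != v) && ~~ e u v : nat) =
     \sum_(u in A) \sum_(v in A) (((rk v < rk u)%N && ~~ e u v : nat) + ((rk u < rk v)%N && ~~ e u v : nat)))%N.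
    apply: eq_bigr => u _; apply: eq_bigr => v _.
    case: (e u v) => /=; rewrite ?andbF ?andbT ?addn0 // -rkE.
    by case: ltngtP.
  rewrite (eq_bigr (fun u => \sum_(v in A) ((rk v < rk u)%N && ~~ e u v : nat) + \sum_(v in A) ((rk u < rk v)%N && ~~ e u v : nat)))%N; last by move=> u _; rewrite big_split.
  rewrite big_split /=; congr (_ + _).
  rewrite exchange_big /=; apply: eq_bigr => u _; apply: eq_bigr => v _; by rewrite Hsym.
pose S := [set v in A | cnt v == 0%N].
have HSc : clique e S.
  apply/forallP => u; apply/implyP => hu; apply/forallP => v; apply/implyP => hv; apply/implyP => nuv.
  move: hu hv; rewrite !inE => /andP [hu cu] /andP [hv cv].
  have : rk u != rk v by rewrite rkE.
  case: ltngtP => // h _.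
  - move: cv; rewrite /cnt sum_nat_eq0 => /forallP/(_ u)/implyP/(_ hu).
    rewrite h /=; case E: (e v u) => // _; by rewrite Hsym E.
  - move: cu; rewrite /cnt sum_nat_eq0 => /forallP/(_ v)/implyP/(_ hv).
    by rewrite h /=; case E: (e u v).
have HSle : (#|S| <= max_clique_in e A)%N.
  have HP : clique e S && (S \subset A).
    rewrite HSc /=.
    by apply/subsetP => x; rewrite inE => /andP [].
  have := @leq_bigmax_cond _ (fun C : {set T} => clique e C && (C \subset A)) (fun C : {set T} => #|C|) S HP.
  done.
have Hle : (#|A| <= #|S| + Zl)%N.
  have -> : #|S| = (\sum_(v in A) ((cnt v == 0%N) : nat))%N.
    rewrite -sum1_card [LHS]big_mkcond [RHS]big_mkcond /=; apply: eq_bigr => v _.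
    by rewrite inE; case: (v \in A); case: (cnt v == 0%N).
  rewrite /Zl -sum1_card -big_split /=; apply: leq_sum => v _; by case: (cnt v).
rewrite HZ; apply: (@leq_trans (2 * (#|S| + Zl))%N).
  by rewrite leq_mul2l Hle orbT.
by rewrite mulnDr [(2 * Zl)%N]mul2n -addnn leq_add2r leq_mul2l HSle orbT.
Qed.

Lemma pairs_count (A : {set T}) : (SS A A + \sum_(u in A) \sum_(v in A) ((u != v) && ~~ e u v : nat) + #|A| = #|A| * #|A|)%N.
Proof.
have -> : (#|A| * #|A| = \sum_(u in A) \sum_(v in A) 1)%N.
  by rewrite sum1_card sum_nat_const.
have -> : #|A| = (\sum_(u in A) \sum_(v in A) (v == u : nat))%N.
  rewrite -sum1_card; apply: eq_bigr => u hu.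
  rewrite (bigD1 u) //= big1 ?eqxx // => v /andP [_ /negbTE ->].
all: try done.
rewrite /SS -!big_split /=; apply: eq_bigr => u _; rewrite -!big_split /=; apply: eq_bigr => v _.
case: (eqVneq u v) => [->|ne]; first by rewrite Hirr.
by rewrite /= addn0; case: (e u v).
Qed.

Lemma main_nat (Vi : {set T}) N (Hreg : forall v, deg e v = N) (HN : (N + 4 = #|T|)%N) :
  (SS Vi Vi + 5 * #|Vi| <= #|Vi| * #|Vi| + #|T| + 2 * max_clique_in e (~: Vi))%N.
Proof.
have h1 := deg_sum_set Vi Vi.
have h2 := deg_sum_set (~: Vi) Vi.
rewrite SS_sym in h2.
rewrite (eq_bigr (fun _ => N)) // sum_nat_const in h1.
rewrite (eq_bigr (fun _ => N)) // sum_nat_const in h2.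
have h3 := pairs_count (~: Vi).
have h4 := clique_bound (~: Vi).
have h5 := cardsC Vi.
move: (\sum_(u in ~: Vi) \sum_(v in ~: Vi) ((u != v) && ~~ e u v : nat))%N h3 h4 => Z h3 h4.
move: (max_clique_in e (~: Vi)) h4 => w h4.
have h6 : (#|Vi| * (N + 4) = #|Vi| * (#|Vi| + #|~: Vi|))%N by rewrite h5 HN.
have h7 : (#|~: Vi| * (N + 4) = #|~: Vi| * (#|Vi| + #|~: Vi|))%N by rewrite h5 HN.
rewrite !mulnDr in h6 h7.
move: h1 h2 h3 h4 h5 h6 h7; rewrite -HN.
move: (SS Vi Vi) (SS Vi (~: Vi)) (SS (~: Vi) (~: Vi)) #|Vi| #|~: Vi| => a b d k c.
rewrite [(c * k)%N]mulnC.
move=> h1 h2 h3 /ssrnat.leP h4 h5 h6 h7; apply/ssrnat.leP.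
move: h1 h2 h3 h4 h5 h6 h7; rewrite -!plusE -!multE; lia.
Qed.
End Comb.

Local Open Scope ring_scope.
Section S.
Variable R : realFieldType.
Definition RR : Type := R.
Definition radd (x y : RR) : RR := (x : R) + y.
Definition rmul (x y : RR) : RR := (x : R) * y.
Definition ropp (x : RR) : RR := - (x : R).
Definition rsub (x y : RR) : RR := radd x (ropp y).
Definition r0 : RR := (0:R).
Definition r1 : RR := (1:R).
Lemma RT : @ring_theory RR r0 r1 radd rmul rsub ropp eq.
Proof. rewrite /radd/rmul/rsub/ropp/r0/r1; split=> //=; [exact: add0r|exact: addrC|exact: addrA|exact: mul1r|exact: mulrC|exact: mulrA|exact: mulrDl|exact: subrr]. Qed.
Add Ring Rring : RT.
Lemma to_eqR (x y : R) : @eq RR x y -> x = y. Proof. by []. Qed.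
Lemma raddE (x y : R) : x + y = radd x y. Proof. by []. Qed.
Lemma rmulE (x y : R) : x * y = rmul x y. Proof. by []. Qed.
Lemma roppE (x : R) : - x = ropp x. Proof. by []. Qed.
Lemma r0E : 0 = r0. Proof. by []. Qed.
Lemma r1E : 1 = r1. Proof. by []. Qed.
Lemma rexp2 (x : R) : x ^+ 2 = x * x. Proof. by rewrite expr2. Qed.
Lemma rnatS n : n.+1%:R = 1 + n%:R :> R. Proof. by rewrite mulrS. Qed.
Ltac rring := apply: to_eqR; rewrite ?rexp2 ?rnatS ?mulr0n !(raddE, rmulE, roppE, r0E, r1E) ; ring.

Local Open Scope ring_scope.

Lemma alg1 (nn NN kk SSv w d a h m2 : R) : 0 < nn -> m2 != 0 -> NN = nn - 4 ->
  m2 = nn * NN -> kk = (h + d) * nn -> w = a * nn -> 2 * h = 1 ->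
  0 <= kk * kk + nn + 2 * w - 5 * kk - SSv ->
  nn * (nn - 4) * (1 / m2 * (SSv - kk * (kk * (NN * NN / m2))))
    <= (4 * d ^+ 2 - d - h + 2 * a) * nn.
Proof.
move=> hn hm2 HNN Hm2 Hkk Hw Hh H.
rewrite -(ler_pM2r hn).
have Hq : m2^-1 * (nn * NN) = 1 by rewrite -Hm2 mulVf.
move: (m2^-1) Hq => q Hq.
have E1 : nn * (nn - 4) * (1 * q * (SSv - kk * (kk * (NN * NN * q)))) * nn
   = (q * (nn * NN)) * SSv * nn - (q * (nn * NN)) * (q * (nn * NN)) * kk * kk * NN.
  rewrite -HNN; rring.
rewrite E1 Hq !mul1r -subr_ge0.
have E2 : (4 * d ^+ 2 - d - h + 2 * a) * nn * nn - (SSv * nn - kk * kk * NN)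
   = nn * (kk * kk + nn + 2 * w - 5 * kk - SSv) - (2 * h - 1) * (2 * h - 1 + 4 * d) * (nn * nn).
  rewrite HNN Hkk Hw; rring.
rewrite E2 Hh subrr !mul0r subr0; apply: mulr_ge0 => //; exact: ltW.
Qed.

Lemma alg2 (d a h dl : R) : 0 <= d -> d <= h -> 2 * h = 1 -> a <= dl -> a <= 1 - h - d ->
  h <= 2 * dl -> 4 * d ^+ 2 - d - h + 2 * a <= 2 * dl - h.
Proof.
move=> hd0 hd1 Hh ha1 ha2 hdl.
rewrite -subr_ge0.
case: (lerP (4 * d) 1) => h4.
- have -> : 2 * dl - h - (4 * d ^+ 2 - d - h + 2 * a) = 2 * (dl - a) + d * (1 - 4 * d) by rring.
  by apply: addr_ge0; apply: mulr_ge0 => //; rewrite ?subr_ge0 ?ler0n.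
- have -> : 2 * dl - h - (4 * d ^+ 2 - d - h + 2 * a) = 2 * (1 - h - d - a) + (2 * dl - h) + (4 * d - 1) * (h - d) + (2 * h - 1) * (2 - 2 * d) by rring.
  rewrite Hh subrr mul0r addr0.
  have h2 : (0 : R) <= 2 by rewrite ler0n.
  apply: addr_ge0; [apply: addr_ge0|].
  + by apply: mulr_ge0 => //; rewrite subr_ge0.
  + by rewrite subr_ge0.
  + by apply: mulr_ge0; rewrite subr_ge0 // ltW.
Qed.

Lemma half_le : (1 / 2 : R) <= 2 * delta_l R.
Proof.
rewrite /delta_l mulrA -natrM ler_pdivrMr ?ltr0n // mulrAC -natrM ler_pdivlMr ?ltr0n //.
by rewrite mul1r ler_nat.
Qed.
Lemma lin_sub (n h d : R) : (1 - h - d) * n = n - (h + d) * n.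
Proof. rring. Qed.
End S.

Theorem lemma7 (R : realFieldType) (T : finType) (e : rel T)
  (Hsimple : simple_graph e)
  (Hn : (4 < #|T|)%N)
  (Hreg : regular e (#|T| - 4))
  (Hclq : forall C : {set T}, clique e C -> (#|C|%:R : R) <= delta_l R * #|T|%:R)
  (Vi : {set T}) (delta : R)
  (Hd0 : 0 < delta) (Hd1 : delta < 1 / 2)
  (HVi : (#|Vi|%:R : R) = (1 / 2 + delta) * #|T|%:R)
  (ahat : R)
  (Hahat : ahat * #|T|%:R = (max_clique_in e (~: Vi))%:R) :
  let n : R := #|T|%:R in
  n * (n - 4) * modularity R e Vi
    <= (4 * delta ^+ 2 - delta - 1 / 2 + 2 * ahat) * n
  /\ (4 * delta ^+ 2 - delta - 1 / 2 + 2 * ahat) * n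
    <= (2 * delta_l R - 1 / 2) * n.
Proof.
move=> n.
case: Hsimple => Hsym Hirr.
set N := (#|T| - 4)%N.
have HN : (N + 4 = #|T|)%N by rewrite subnK // ltnW.
have hn : (0 : R) < n by rewrite ltr0n (leq_ltn_trans _ Hn).
have HNR : (N%:R : R) = n - 4 by rewrite /n -HN natrD addrK.
have Hh : (2 : R) * (1 / 2) = 1 by rewrite mul1r mulfV // pnatr_eq0.
have Hm : (2 * nedges e = #|T| * N)%N.
  rewrite (handshake Hsym Hirr).
  rewrite (eq_bigr (fun u => N)); last by move=> u _; rewrite -deg_sum; exact: Hreg.
  by rewrite sum_nat_const.
have Hm2 : (2 * (nedges e)%:R : R) = n * N%:R by rewrite /n -!natrM Hm.
have HN0 : (0 < N)%N by rewrite subn_gt0.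
have Hm2nz : (2 * (nedges e)%:R : R) != 0.
  rewrite Hm2 mulf_neq0 //; first exact: lt0r_neq0.
  by rewrite pnatr_eq0 -lt0n.
split.
- rewrite /modularity.
  have Hsum : \sum_(u in Vi) \sum_(v in Vi) ((e u v)%:R - (deg e u)%:R * (deg e v)%:R / (2 * (nedges e)%:R))
     = (SS e Vi Vi)%:R - #|Vi|%:R * (#|Vi|%:R * (N%:R * N%:R / (2 * (nedges e)%:R))) :> R.
    rewrite (eq_bigr (fun u => (\sum_(v in Vi) (e u v : nat))%:R - #|Vi|%:R * (N%:R * N%:R / (2 * (nedges e)%:R)))); last first.
      move=> u _; rewrite (eq_bigr (fun v => (e u v)%:R - N%:R * N%:R / (2 * (nedges e)%:R))); last first. move=> v _. have H1 := Hreg u. have H2 := Hreg v. rewrite /deg in H1 H2 *. rewrite H1 H2. reflexivity.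
      by rewrite sumrB natr_sum sumr_const -[_ *+ #|Vi|]mulr_natl.
    by rewrite sumrB natr_sum sumr_const -[_ *+ #|Vi|]mulr_natl.
  rewrite Hsum.
  have Hnat := main_nat Hsym Hirr Vi Hreg HN.
  rewrite -(ler_nat R) natrD [X in _ <= X]natrD [X in _ <= X + _]natrD !natrM in Hnat.
  apply: (alg1 hn Hm2nz HNR Hm2 HVi (esym Hahat) Hh).
  rewrite -addrA -opprD subr_ge0 (addrC (5 * _)); exact: Hnat.
- rewrite ler_pM2r //.
  have [C HC HeqC] : exists2 C : {set T}, clique e C && (C \subset ~: Vi) & max_clique_in e (~: Vi) = #|C|.
    have H0 : clique e set0 && (set0 \subset ~: Vi).
      by rewrite sub0set andbT; apply/forallP => u; rewrite in_set0.
    exists [arg max_(C > set0 | clique e C && (C \subset ~: Vi)) #|C|].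
    + by case: arg_maxnP.
    + have := (@bigop.bigmax_eq_arg _ set0 (fun C : {set T} => clique e C && (C \subset ~: Vi)) (fun C : {set T} => #|C|) H0). by [].
  apply: (alg2 (ltW Hd0) (ltW Hd1) Hh) ; last exact: half_le.
  + rewrite -(ler_pM2r hn) Hahat HeqC; apply: Hclq; by case/andP: HC.
  + rewrite -(ler_pM2r hn) Hahat lin_sub -HVi.
    have Hc : (max_clique_in e (~: Vi) <= #|~: Vi|)%N.
      apply/bigmax_leqP => D /andP [_ hD]; exact: subset_leq_card.
    rewrite -(ler_nat R) in Hc; apply: (le_trans Hc).
    by rewrite /n -(cardsC Vi) natrD addrC addKr.
Qed.
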